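(* Let $G$ be a group generated by a finite set $S$. Assume that every subset of $S$ with (at most) $4$ elements generates a subgroup of exponent $3$. Then $G$ has exponent $3$. *)

(* Defs.v *)
From Stdlib Require Import List Arith.
Import ListNotations.

Record Group : Type := {
  carrier :> Type;
  gmul : carrier -> carrier -> carrier;
  gone : carrier;
  ginv : carrier -> carrier;
  gmul_assoc : forall x y z, gmul x (gmul y z) = gmul (gmul x y) z;
  gmul_1l : forall x, gmul gone x = x;
  gmul_1r : forall x, gmul x gone = x;
  gmul_Vl : forall x, gmul (ginv x) x = gone;
  gmul_Vr : forall x, gmul x (ginv x) = gone
}.

Arguments gmul {G} : rename.
Arguments gone {G} : rename.
Arguments ginv {G} : rename.

Inductive generated {G : Group} (A : G -> Prop) : G -> Prop :=
  | gen_base : forall x, A x -> generated A x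
  | gen_one : generated A gone
  | gen_mul : forall x y, generated A x -> generated A y -> generated A (gmul x y)
  | gen_inv : forall x, generated A x -> generated A (ginv x).

Definition cube {G : Group} (x : G) : G := gmul x (gmul x x).

Definition has_exponent3 {G : Group} (H : G -> Prop) : Prop :=
  forall x, H x -> cube x = gone.

(* Main.v *)
Require Import Defs.
From Stdlib Require Import List Arith Bool Lia.
Import ListNotations.

Section Basic.
Variable G : Group.
Implicit Types a b c x y : G.

Lemma inv_unique a b : gmul a b = gone -> b = ginv a.
Proof.
  intro H. rewrite <- (gmul_1l G b), <- (gmul_Vl G a), <- gmul_assoc, H, gmul_1r. reflexivity.
Qed.
Lemma inv_inv a : ginv (ginv a) = a.
Proof. symmetry. apply inv_unique. apply gmul_Vl. Qed.
Lemma inv_mul a b : ginv (gmul a b) = gmul (ginv b) (ginv a).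
Proof.
  symmetry. apply inv_unique.
  rewrite gmul_assoc, <- (gmul_assoc G a b), gmul_Vr, gmul_1r, gmul_Vr. reflexivity.
Qed.
Lemma inv_one : ginv (@gone G) = gone.
Proof. symmetry. apply inv_unique. apply gmul_1l. Qed.

Definition commute a b := gmul a b = gmul b a.

Lemma commute_inv_l a b : commute a b -> commute (ginv a) b.
Proof.
  unfold commute. intro H.
  transitivity (gmul (gmul (ginv a) (gmul b a)) (ginv a)).
  - rewrite <- !gmul_assoc, gmul_Vr, gmul_1r. reflexivity.
  - rewrite <- H, gmul_assoc, gmul_Vl, gmul_1l. reflexivity.
Qed.
Lemma commute_sym a b : commute a b -> commute b a.
Proof. unfold commute; auto. Qed.
Lemma commute_inv_r a b : commute a b -> commute a (ginv b).
Proof. intro H. apply commute_sym, commute_inv_l, commute_sym, H. Qed.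
Lemma commute_mul_r a b c : commute a b -> commute a c -> commute a (gmul b c).
Proof.
  unfold commute; intros H1 H2.
  rewrite gmul_assoc, H1, <- gmul_assoc, H2, gmul_assoc. reflexivity.
Qed.
Lemma commute_one_r a : commute a gone.
Proof. unfold commute; rewrite gmul_1l, gmul_1r; reflexivity. Qed.
End Basic.

Arguments commute {G}.

Inductive gexp := GAt (n : nat) | GMul (a b : gexp) | GInv (a : gexp) | GOne.

Fixpoint geval {G : Group} (env : list G) (e : gexp) : G :=
  match e with
  | GAt n => nth n env gone
  | GMul a b => gmul (geval env a) (geval env b)
  | GInv a => ginv (geval env a)
  | GOne => gone
  end.

Definition letter := (nat * bool)%type.
Definition lval {G : Group} (env : list G) (l : letter) : G :=
  if snd l then ginv (nth (fst l) env gone) else nth (fst l) env gone.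
Fixpoint wval {G : Group} (env : list G) (w : list letter) : G :=
  match w with [] => gone | l :: w' => gmul (lval env l) (wval env w') end.

Definition flipl (l : letter) : letter := (fst l, negb (snd l)).
Fixpoint flat (e : gexp) : list letter :=
  match e with
  | GAt n => [(n, false)]
  | GMul a b => flat a ++ flat b
  | GInv a => map flipl (rev (flat a))
  | GOne => []
  end.

Definition inv_pair (l1 l2 : letter) : bool :=
  Nat.eqb (fst l1) (fst l2) && xorb (snd l1) (snd l2).

Fixpoint red_aux (st : list letter) (w : list letter) : list letter :=
  match w with
  | [] => rev st
  | l :: w' =>
      match st with
      | s :: st' => if inv_pair s l then red_aux st' w' else red_aux (l :: st) w'
      | [] => red_aux [l] w'
      end
  end.
Definition red w := red_aux [] w.

Definition lt_letter (l1 l2 : letter) : bool :=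
  Nat.ltb (fst l1) (fst l2) ||
  (Nat.eqb (fst l1) (fst l2) && (snd l1 && negb (snd l2))).
Fixpoint insert (l : letter) (w : list letter) : list letter :=
  match w with
  | [] => [l]
  | m :: w' => if lt_letter m l then m :: insert l w' else l :: w
  end.
Fixpoint isort (w : list letter) : list letter :=
  match w with [] => [] | l :: w' => insert l (isort w') end.

Definition isc (cs : list nat) (l : letter) : bool := existsb (Nat.eqb (fst l)) cs.

Definition nf (cs : list nat) (w : list letter) : list letter :=
  red (isort (filter (isc cs) w)) ++ red (filter (fun l => negb (isc cs l)) w).

Section Sound.
Variable G : Group.
Variable env : list G.

Lemma wval_app w1 w2 : wval env (w1 ++ w2) = gmul (wval env w1) (wval env w2).
Proof.
  induction w1; simpl. rewrite gmul_1l; auto.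
  rewrite IHw1, gmul_assoc; auto.
Qed.

Lemma lval_flip l : lval env (flipl l) = ginv (lval env l).
Proof. destruct l as [n []]; unfold lval, flipl; simpl; auto. rewrite inv_inv; auto. Qed.

Lemma wval_inv w : wval env (map flipl (rev w)) = ginv (wval env w).
Proof.
  induction w; simpl. rewrite inv_one; auto.
  rewrite map_app, wval_app, IHw, inv_mul. simpl. rewrite lval_flip, gmul_1r. auto.
Qed.

Lemma flat_ok e : wval env (flat e) = geval env e.
Proof.
  induction e; simpl.
  - apply gmul_1r.
  - rewrite wval_app, IHe1, IHe2; auto.
  - rewrite wval_inv, IHe; auto.
  - auto.
Qed.

Lemma inv_pair_ok s l : inv_pair s l = true -> gmul (lval env s) (lval env l) = gone.
Proof.
  destruct s as [n a], l as [m b]; unfold inv_pair, lval; simpl.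
  intro H; apply andb_prop in H; destruct H as [H1 H2].
  apply Nat.eqb_eq in H1; subst m.
  destruct a, b; simpl in H2; try discriminate.
  apply gmul_Vl. apply gmul_Vr.
Qed.

Lemma red_aux_ok st w : wval env (red_aux st w) = wval env (rev st ++ w).
Proof.
  revert st; induction w as [|l w IH]; intro st; simpl.
  - rewrite app_nil_r; auto.
  - destruct st as [|s st'].
    + rewrite IH; auto.
    + destruct (inv_pair s l) eqn:E.
      * rewrite IH. simpl. rewrite <- app_assoc. simpl.
        rewrite !wval_app. simpl. f_equal.
        rewrite gmul_assoc, (inv_pair_ok _ _ E), gmul_1l. auto.
      * rewrite IH. simpl. rewrite <- app_assoc. auto.
Qed.

Lemma red_ok w : wval env (red w) = wval env w.
Proof. unfold red; rewrite red_aux_ok; auto. Qed.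

Variable cs : list nat.
Hypothesis Hc : Forall (fun n => Forall (fun b => commute (nth n env gone) b) env) cs.

Lemma nth_commute_all n b : In n cs -> commute (nth n env gone) (nth b env gone).
Proof.
  intro Hn. rewrite Forall_forall in Hc. specialize (Hc n Hn).
  rewrite Forall_forall in Hc.
  destruct (Nat.lt_ge_cases b (length env)).
  - apply Hc, nth_In; auto.
  - rewrite (nth_overflow env gone H). apply commute_one_r.
Qed.

Lemma isc_comm l m : isc cs l = true -> commute (lval env l) (lval env m).
Proof.
  unfold isc; intro H. apply existsb_exists in H. destruct H as [n [Hn E]].
  apply Nat.eqb_eq in E.
  destruct l as [a x], m as [b y]; unfold lval; simpl in *; subst n.
  pose proof (nth_commute_all a b Hn).
  destruct x, y; auto using commute_inv_l, commute_inv_r.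
Qed.

Lemma comm_wval l w : (forall m, In m w -> commute (lval env m) (lval env l)) ->
  commute (wval env w) (lval env l).
Proof.
  induction w; simpl; intro H.
  - apply commute_sym, commute_one_r.
  - apply commute_sym, commute_mul_r; apply commute_sym; auto.
Qed.

Lemma split_ok w : wval env w =
  gmul (wval env (filter (isc cs) w)) (wval env (filter (fun l => negb (isc cs l)) w)).
Proof.
  induction w as [|l w IH]; simpl. rewrite gmul_1l; auto.
  destruct (isc cs l) eqn:E; simpl.
  - rewrite IH, gmul_assoc; auto.
  - rewrite IH, !gmul_assoc. f_equal.
    symmetry. apply comm_wval. intros m Hm.
    apply filter_In in Hm. destruct Hm as [_ Hm]. apply isc_comm; auto.
Qed.

Lemma insert_ok l w : (forall m, In m (l :: w) -> isc cs m = true) ->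
  wval env (insert l w) = gmul (lval env l) (wval env w).
Proof.
  induction w as [|m w IH]; simpl; intro H; auto.
  destruct (lt_letter m l); simpl; auto.
  rewrite IH. rewrite !gmul_assoc. f_equal. apply isc_comm. apply H; simpl; auto.
  intros k [Hk|Hk]; apply H; simpl; auto.
Qed.

Lemma insert_in l w m : In m (insert l w) -> m = l \/ In m w.
Proof.
  induction w as [|k w IH]; simpl. intuition.
  destruct (lt_letter k l); simpl; intuition.
Qed.

Lemma isort_in w m : In m (isort w) -> In m w.
Proof.
  induction w; simpl; auto. intro H. apply insert_in in H. intuition.
Qed.

Lemma isort_ok w : (forall m, In m w -> isc cs m = true) ->
  wval env (isort w) = wval env w.
Proof.
  induction w as [|l w IH]; simpl; intro H; auto.
  rewrite insert_ok. rewrite IH; auto.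
  intros m [<-|Hm]; auto. apply H. right. apply isort_in; auto.
Qed.

Lemma nf_ok w : wval env (nf cs w) = wval env w.
Proof.
  unfold nf. rewrite wval_app, !red_ok, isort_ok, <- split_ok; auto.
  intros m Hm. apply filter_In in Hm; tauto.
Qed.

Theorem nf_sound e1 e2 : nf cs (flat e1) = nf cs (flat e2) -> geval env e1 = geval env e2.
Proof.
  intro H. rewrite <- !flat_ok, <- (nf_ok (flat e1)), <- (nf_ok (flat e2)), H. auto.
Qed.
End Sound.

Ltac mem x l := lazymatch l with
  | nil => constr:(false)
  | cons x _ => constr:(true)
  | cons _ ?l' => mem x l'
  end.
Ltac lookup x l := lazymatch l with
  | cons x _ => constr:(0)
  | cons _ ?l' => let n := lookup x l' in constr:(S n)
  end.
Ltac collect t l :=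
  lazymatch t with
  | gmul ?a ?b => let l1 := collect a l in collect b l1
  | ginv ?a => collect a l
  | gone => l
  | _ => let b := mem t l in lazymatch b with true => l | false => constr:(cons t l) end
  end.
Ltac reify t l :=
  lazymatch t with
  | gmul ?a ?b => let ea := reify a l in let eb := reify b l in constr:(GMul ea eb)
  | ginv ?a => let ea := reify a l in constr:(GInv ea)
  | gone => constr:(GOne)
  | _ => let n := lookup t l in constr:(GAt n)
  end.

Definition central {G : Group} (a : G) := forall g, commute a g.

Ltac central_idx l i :=
  lazymatch l with
  | nil => constr:(@nil nat)
  | cons ?a ?l' =>
      let r := central_idx l' (S i) in
      lazymatch goal with
      | _ : central a |- _ => constr:(cons i r)
      | _ => r
      end
  end.
Ltac all_idx l i :=
  lazymatch l with
  | nil => constr:(@nil nat)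
  | cons _ ?l' => let r := all_idx l' (S i) in constr:(cons i r)
  end.

Ltac gen_eq_core mode tac :=
  lazymatch goal with
  | |- @eq (carrier ?G) ?lhs ?rhs =>
    let l0 := collect lhs (@nil (carrier G)) in
    let l := collect rhs l0 in
    let e1 := reify lhs l in let e2 := reify rhs l in
    let cs := lazymatch mode with
              | true => all_idx l 0
              | false => central_idx l 0 end in
    change (geval l e1 = geval l e2);
    apply (nf_sound G l cs);
    [ repeat first [apply Forall_nil | apply Forall_cons]; cbn [nth]; tac
    | vm_compute; reflexivity ]
  end.

Ltac given_idx l i cl :=
  lazymatch l with
  | nil => constr:(@nil nat)
  | cons ?a ?l' =>
      let r := given_idx l' (S i) cl in
      let b := mem a cl in
      lazymatch b with true => constr:(cons i r) | false => r end
  end.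
Ltac gen_eq_given cl tac :=
  lazymatch goal with
  | |- @eq (carrier ?G) ?lhs ?rhs =>
    let l0 := collect lhs (@nil (carrier G)) in
    let l := collect rhs l0 in
    let e1 := reify lhs l in let e2 := reify rhs l in
    let cs := given_idx l 0 cl in
    change (geval l e1 = geval l e2);
    apply (nf_sound G l cs);
    [ repeat first [apply Forall_nil | apply Forall_cons]; cbn [nth]; tac
    | vm_compute; reflexivity ]
  end.

Ltac use_central := idtac; match goal with H : central ?a |- commute ?a _ => apply H end.
(* free group + central hypotheses *)
Ltac group_eq := gen_eq_core false use_central.
(* all atoms pairwise commute, proved by tac *)
Ltac abel_eq tac := gen_eq_core true tac.

Goal forall (G : Group) (a b c : G), central c ->
  gmul a (gmul c (ginv a)) = gmul (ginv b) (gmul c (gmul b gone)).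
Proof. intros. group_eq. Qed.

Definition conj {G : Group} (u g : G) := gmul (ginv g) (gmul u g).
Definition comm {G : Group} (u g : G) := gmul (ginv u) (gmul (ginv g) (gmul u g)).

Section Gen.
Variable G : Group.
Lemma conj_commute (c v : G) : commute c v -> conj c v = c.
Proof. unfold conj, commute; intro H. rewrite H. group_eq. Qed.
Lemma comm_commute (c g : G) : commute c g -> comm c g = gone.
Proof. unfold comm, commute; intro H. rewrite H. group_eq. Qed.
Lemma commute_refl (a : G) : commute a a.
Proof. reflexivity. Qed.
Lemma comm_one_l (g : G) : comm gone g = gone.
Proof. unfold comm. group_eq. Qed.
Lemma commute_mul_l (a b c : G) : commute a c -> commute b c -> commute (gmul a b) c.
Proof. intros. apply commute_sym, commute_mul_r; apply commute_sym; auto. Qed.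
End Gen.

Section Local.
Variable G : Group.
Variable L : G -> Prop.
Hypothesis L1 : L gone.
Hypothesis Lmul : forall a b, L a -> L b -> L (gmul a b).
Hypothesis Linv : forall a, L a -> L (ginv a).
Hypothesis L3 : forall u, L u -> cube u = gone.
Implicit Types u v g h a b : G.

Lemma engel2 u g : L u -> L g -> commute u (conj u g).
Proof.
  intros Lu Lg.
  assert (P : cube (gmul u (ginv g)) = gone) by auto.
  assert (R : cube (gmul u g) = gone) by auto.
  assert (Q : cube g = gone) by auto.
  unfold commute, conj.
  transitivity (gmul g (gmul (ginv u) (ginv g))).
  - transitivity (gmul (cube (gmul u (ginv g))) (gmul g (gmul (ginv u) (gmul (ginv g) (cube g))))).
    + unfold cube; group_eq.
    + rewrite P, Q; group_eq.
  - symmetry.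
    transitivity (gmul (ginv (cube g)) (gmul g (gmul g (gmul (cube (gmul u g)) (gmul (ginv g) (gmul (ginv u) (ginv g))))))).
    + unfold cube; group_eq.
    + rewrite R, Q, inv_one; group_eq.
Qed.

Lemma comm_commute_g u g : L u -> L g -> commute (comm u g) g.
Proof.
  intros Lu Lg.
  assert (E : comm u g = gmul (ginv (conj g u)) g) by (unfold comm, conj; group_eq).
  rewrite E. apply commute_sym, commute_mul_r.
  - apply commute_inv_r, engel2; auto.
  - apply commute_refl.
Qed.

Lemma comm_commute_u u g : L u -> L g -> commute (comm u g) u.
Proof.
  intros Lu Lg.
  assert (E : comm u g = gmul (ginv u) (conj u g)) by (unfold comm, conj; group_eq).
  rewrite E. apply commute_sym, commute_mul_r.
  - apply commute_inv_r, commute_refl.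
  - apply engel2; auto.
Qed.

Lemma L_comm u g : L u -> L g -> L (comm u g).
Proof. intros; unfold comm; auto 6. Qed.
Lemma L_conj u g : L u -> L g -> L (conj u g).
Proof. intros; unfold conj; auto 6. Qed.

Lemma DD u g : L u -> L g -> comm (comm u g) g = gone.
Proof. intros; apply comm_commute, comm_commute_g; auto. Qed.

Lemma Dinv u g : L u -> L g -> comm u (ginv g) = ginv (comm u g).
Proof.
  intros Lu Lg.
  pose proof (comm_commute_g u g Lu Lg) as H.
  transitivity (conj (ginv (comm u g)) (ginv g)).
  - unfold conj, comm. group_eq.
  - apply conj_commute. apply commute_inv_l, commute_inv_r, H.
Qed.

Lemma Dgh u g h : comm u (gmul g h) = gmul (comm u h) (gmul (comm u g) (comm (comm u g) h)).
Proof. unfold comm. group_eq. Qed.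

Variable x : G.
Hypothesis Lx : L x.
Definition Mx := generated (fun v => exists g, L g /\ v = conj x g).

Lemma M_L v : Mx v -> L v.
Proof.
  induction 1 as [v [g [Lg ->]]| | |]; auto. apply L_conj; auto.
Qed.

Lemma M_mul a b : Mx a -> Mx b -> Mx (gmul a b).
Proof. apply gen_mul. Qed.
Lemma M_inv a : Mx a -> Mx (ginv a).
Proof. apply gen_inv. Qed.
Lemma M_one : Mx gone.
Proof. apply gen_one. Qed.

Lemma M_comm_gen g h : L g -> L h -> commute (conj x g) (conj x h).
Proof.
  intros Lg Lh.
  assert (E : conj x h = conj (conj x g) (gmul (ginv g) h)) by (unfold conj; group_eq).
  rewrite E. apply engel2; auto. apply L_conj; auto.
Qed.

Lemma Mcomm a b : Mx a -> Mx b -> commute a b.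
Proof.
  intros Ha Hb. revert b Hb.
  induction Ha as [a [g [Lg ->]]| | a1 a2 _ IH1 _ IH2 | a _ IH]; intros b Hb.
  - induction Hb as [b [h [Lh ->]]| | |].
    + apply M_comm_gen; auto.
    + apply commute_one_r.
    + apply commute_mul_r; auto.
    + apply commute_inv_r; auto.
  - apply commute_sym, commute_one_r.
  - apply commute_mul_l; auto.
  - apply commute_inv_l; auto.
Qed.

Lemma M_conj v g : Mx v -> L g -> Mx (conj v g).
Proof.
  intros Hv Lg. induction Hv as [v [h [Lh ->]]| | a b _ IH1 _ IH2 | a _ IH].
  - apply gen_base. exists (gmul h g). split; auto. unfold conj; group_eq.
  - replace (conj gone g) with (@gone G) by (unfold conj; group_eq). apply M_one.
  - replace (conj (gmul a b) g) with (gmul (conj a g) (conj b g)) by (unfold conj; group_eq).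
    apply M_mul; auto.
  - replace (conj (ginv a) g) with (ginv (conj a g)) by (unfold conj; group_eq).
    apply M_inv; auto.
Qed.

Lemma M_comm v g : Mx v -> L g -> Mx (comm v g).
Proof.
  intros Hv Lg.
  replace (comm v g) with (gmul (ginv v) (conj v g)) by (unfold comm, conj; group_eq).
  apply M_mul. apply M_inv; auto. apply M_conj; auto.
Qed.

Lemma M_x : Mx x.
Proof. apply gen_base. exists gone. split; auto. unfold conj; group_eq. Qed.

Hint Resolve M_comm M_mul M_inv M_one M_L L_comm Lmul Linv L1 M_x : mdb.

Lemma Dadd u v g : Mx u -> Mx v -> L g -> comm (gmul u v) g = gmul (comm u g) (comm v g).
Proof.
  intros Hu Hv Lg.
  transitivity (gmul (conj (comm u g) v) (comm v g)).
  - unfold comm, conj; group_eq.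
  - rewrite conj_commute; auto. apply Mcomm; auto with mdb.
Qed.

Lemma Dinv_arg u g : Mx u -> L g -> comm (ginv u) g = ginv (comm u g).
Proof.
  intros Hu Lg.
  assert (H : gmul (comm (ginv u) g) (comm u g) = gone).
  { rewrite <- Dadd by auto with mdb. rewrite gmul_Vl. apply comm_one_l. }
  transitivity (gmul (gmul (comm (ginv u) g) (comm u g)) (ginv (comm u g))).
  - group_eq.
  - rewrite H; group_eq.
Qed.

Ltac mtac := idtac; apply Mcomm; auto with mdb.


Lemma sq_one k : L k -> gmul k k = gone -> k = gone.
Proof.
  intros Lk H. transitivity (gmul (cube k) (ginv (gmul k k))).
  - unfold cube; group_eq.
  - rewrite H, L3 by auto. group_eq.
Qed.

Ltac simp_in H :=
  repeat first
    [ rewrite Dgh in H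
    | rewrite Dadd in H by auto with mdb
    | rewrite Dinv in H by auto with mdb
    | rewrite Dinv_arg in H by auto with mdb
    | rewrite DD in H by auto with mdb
    | rewrite comm_one_l in H
    | rewrite inv_inv in H
    | rewrite inv_one in H
    | rewrite gmul_1l in H
    | rewrite gmul_1r in H ].

Ltac lhs_of H := match type of H with ?e = _ => e end.

Lemma Kv v g h : Mx v -> L g -> L h ->
  gmul (comm (comm v g) h) (gmul (comm (comm v h) g) (comm (comm (comm v g) h) g)) = gone.
Proof.
  intros Hv Lg Lh.
  assert (H1 : comm (comm v (gmul g h)) (gmul g h) = gone) by (apply DD; auto with mdb).
  simp_in H1.
  assert (H2 : comm (comm v (gmul g (ginv h))) (gmul g (ginv h)) = gone) by (apply DD; auto with mdb).
  simp_in H2.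
  apply sq_one. auto 10 with mdb.
  let e1 := lhs_of H1 in let e2 := lhs_of H2 in
  transitivity (gmul e1 (ginv e2)).
  - abel_eq mtac.
  - rewrite H1, H2. group_eq.
Qed.

Lemma ABA v g h : Mx v -> L g -> L h -> comm (comm (comm v g) h) g = gone.
Proof.
  intros Hv Lg Lh.
  pose proof (Kv (comm v g) g h) as H. simp_in H.
  apply H; auto with mdb.
Qed.

Lemma AC v g h : Mx v -> L g -> L h -> gmul (comm (comm v g) h) (comm (comm v h) g) = gone.
Proof.
  intros Hv Lg Lh.
  pose proof (Kv v g h Hv Lg Lh) as H. rewrite ABA, gmul_1r in H by auto. exact H.
Qed.

Lemma triple v g h k : Mx v -> L g -> L h -> L k -> comm (comm (comm v g) h) k = gone.
Proof.
  intros Hv Lg Lh Lk.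
  pose proof (AC v (gmul g h) k Hv ltac:(auto) Lk) as H.
  pose proof (AC v g k Hv Lg Lk) as X1.
  pose proof (AC v h k Hv Lh Lk) as X2.
  pose proof (AC (comm v g) h k ltac:(auto with mdb) Lh Lk) as X3.
  assert (Y : comm (comm v k) g = ginv (comm (comm v g) k)) by (apply inv_unique; exact X1).
  simp_in H. rewrite Y in H. simp_in H.
  apply sq_one. auto 10 with mdb.
  let e := lhs_of H in let e2 := lhs_of X2 in let e3 := lhs_of X3 in
  transitivity (gmul e (gmul (ginv e2) e3)).
  - abel_eq mtac.
  - rewrite H, X2, X3. group_eq.
Qed.

End Local.

Theorem exp3_class3 (G : Group) (L : G -> Prop) (L1 : L gone)
  (Lmul : forall a b, L a -> L b -> L (gmul a b))
  (Linv : forall a, L a -> L (ginv a))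
  (L3 : forall u, L u -> cube u = gone) (x a b c : G) :
  L x -> L a -> L b -> L c -> comm (comm (comm x a) b) c = gone.
Proof.
  intros Lx La Lb Lc. apply (triple G L L1 Lmul Linv L3 x Lx); auto.
  apply M_x; auto.
Qed.

Section Global.
Variable G : Group.
Variable S : list G.
Hypothesis hgen : forall g : G, generated (fun x => In x S) g.
Hypothesis h4 : forall T : list G, incl T S -> length T <= 4 ->
        has_exponent3 (generated (fun x => In x T)).
Implicit Types a b c g h p q u v x y z : G.

Lemma closure (P : G -> Prop) : P gone -> (forall a b, P a -> P b -> P (gmul a b)) ->
  (forall a, P a -> P (ginv a)) -> (forall s, In s S -> P s) -> forall g, P g.
Proof.
  intros H1 Hm Hi Hs g. induction (hgen g); auto.
Qed.

Lemma comm_gone_commute c g : comm c g = gone -> commute c g.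
Proof.
  unfold commute; intro H.
  transitivity (gmul (gmul g c) (comm c g)).
  - unfold comm; group_eq.
  - rewrite H; group_eq.
Qed.

Lemma central_one : central (@gone G).
Proof. intro g. apply commute_sym, commute_one_r. Qed.
Lemma central_mul a b : central a -> central b -> central (gmul a b).
Proof. intros Ha Hb g. apply commute_mul_l; auto. Qed.
Lemma central_inv a : central a -> central (ginv a).
Proof. intros Ha g. apply commute_inv_l; auto. Qed.
Lemma central_conj a g : central a -> conj a g = a.
Proof. intros Ha. apply conj_commute, Ha. Qed.

Section Loc.
Variable T : list G.
Hypothesis HT : incl T S.
Hypothesis HL : length T <= 4.
Let L := generated (fun x => In x T).
Lemma loc_class3 x a b c : In x T -> In a T -> In b T -> In c T ->
  comm (comm (comm x a) b) c = gone.
Proof.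
  intros. apply (exp3_class3 G L (gen_one _) (gen_mul _) (gen_inv _) (h4 T HT HL));
    apply gen_base; auto.
Qed.
End Loc.

Ltac inS := unfold incl; simpl; intuition (subst; auto).

Lemma central_gen3 x y z : In x S -> In y S -> In z S -> central (comm (comm x y) z).
Proof.
  intros Hx Hy Hz g. revert g. apply closure.
  - apply commute_one_r.
  - intros; apply commute_mul_r; auto.
  - intros; apply commute_inv_r; auto.
  - intros w Hw. apply comm_gone_commute.
    apply (loc_class3 [x; y; z; w]); simpl; auto. inS. 
Qed.

Lemma comm_mul_r p g h : comm p (gmul g h) = gmul (comm p h) (conj (comm p g) h).
Proof. unfold comm, conj; group_eq. Qed.
Lemma comm_inv_r p g : comm p (ginv g) = conj (ginv (comm p g)) (ginv g).
Proof. unfold comm, conj; group_eq. Qed.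
Lemma comm_mul_l p q g : comm (gmul p q) g = gmul (conj (comm p g) q) (comm q g).
Proof. unfold comm, conj; group_eq. Qed.
Lemma comm_inv_l p g : comm (ginv p) g = conj (ginv (comm p g)) (ginv p).
Proof. unfold comm, conj; group_eq. Qed.
Lemma comm_one_r p : comm p gone = gone.
Proof. unfold comm; group_eq. Qed.
Lemma conj_eq p g : conj p g = gmul p (comm p g).
Proof. unfold comm, conj; group_eq. Qed.

Lemma step1 x y : In x S -> In y S -> forall c, central (comm (comm x y) c).
Proof.
  intros Hx Hy. apply closure.
  - rewrite comm_one_r. apply central_one.
  - intros a b Ha Hb. rewrite comm_mul_r, central_conj by auto. apply central_mul; auto.
  - intros a Ha. rewrite comm_inv_r, central_conj by auto using central_inv. apply central_inv; auto.
  - intros; apply central_gen3; auto.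
Qed.

Definition Z2 p := forall c, central (comm p c).
Lemma Z2_mul p q : Z2 p -> Z2 q -> Z2 (gmul p q).
Proof.
  intros Hp Hq c. rewrite comm_mul_l, central_conj by auto. apply central_mul; auto.
Qed.
Lemma Z2_inv p : Z2 p -> Z2 (ginv p).
Proof.
  intros Hp c. rewrite comm_inv_l, central_conj by auto using central_inv. apply central_inv; auto.
Qed.
Lemma Z2_central z : central z -> Z2 z.
Proof. intros Hz c. rewrite comm_commute by auto. apply central_one. Qed.
Lemma Z2_one : Z2 gone.
Proof. apply Z2_central, central_one. Qed.
Lemma Z2_conj p g : Z2 p -> Z2 (conj p g).
Proof. intros Hp. rewrite conj_eq. apply Z2_mul; auto. apply Z2_central; auto. Qed.

Lemma step2 x : In x S -> forall b, Z2 (comm x b).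
Proof.
  intros Hx. apply closure.
  - rewrite comm_one_r. apply Z2_one.
  - intros a b Ha Hb. rewrite comm_mul_r. apply Z2_mul; auto. apply Z2_conj; auto.
  - intros a Ha. rewrite comm_inv_r. apply Z2_conj, Z2_inv; auto.
  - intros y Hy c. apply step1; auto.
Qed.

Lemma step3 : forall a b, Z2 (comm a b).
Proof.
  apply (closure (fun a => forall b, Z2 (comm a b))).
  - intro b. replace (comm gone b) with (@gone G) by (unfold comm; group_eq). apply Z2_one.
  - intros a1 a2 H1 H2 b. rewrite comm_mul_l. apply Z2_mul; auto. apply Z2_conj; auto.
  - intros a Ha b. rewrite comm_inv_l. apply Z2_conj, Z2_inv; auto.
  - intros x Hx. apply step2; auto.
Qed.

Lemma centralT a b c : central (comm (comm a b) c).
Proof. apply step3. Qed.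


Ltac add_centrals :=
  repeat match goal with
  | |- context [comm (comm ?a ?b) ?c] =>
      lazymatch goal with
      | _ : central (comm (comm a b) c) |- _ => fail
      | _ => pose proof (centralT a b c)
      end
  end.
Ltac cgroup := add_centrals; group_eq.

Lemma inv_unique_l x y : gmul x y = gone -> x = ginv y.
Proof.
  intro H. transitivity (gmul (gmul x y) (ginv y)). group_eq. rewrite H. group_eq.
Qed.

Lemma comm_mul_l_Z2 p q g : Z2 p -> comm (gmul p q) g = gmul (comm p g) (comm q g).
Proof. intro Hp. rewrite comm_mul_l, central_conj; auto. Qed.

Lemma T_mul3 a b c1 c2 : comm (comm a b) (gmul c1 c2) = gmul (comm (comm a b) c1) (comm (comm a b) c2).
Proof. rewrite comm_mul_r, central_conj by apply centralT. cgroup. Qed.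

Lemma T_mul1 a1 a2 b c : comm (comm (gmul a1 a2) b) c = gmul (comm (comm a1 b) c) (comm (comm a2 b) c).
Proof.
  rewrite comm_mul_l, conj_eq, !comm_mul_l_Z2.
  - rewrite (comm_commute _ (comm (comm a1 b) a2) c) by apply centralT. cgroup.
  - apply step3.
  - apply Z2_mul. apply step3. apply Z2_central, centralT.
Qed.

Lemma T_mul2 a b1 b2 c : comm (comm a (gmul b1 b2)) c = gmul (comm (comm a b1) c) (comm (comm a b2) c).
Proof.
  rewrite comm_mul_r, conj_eq, !comm_mul_l_Z2.
  - rewrite (comm_commute _ (comm (comm a b1) b2) c) by apply centralT. cgroup.
  - apply step3.
  - apply step3.
Qed.

Lemma T_one1 b c : comm (comm (@gone G) b) c = gone.
Proof. unfold comm; group_eq. Qed.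
Lemma T_one2 a c : comm (comm a (@gone G)) c = gone.
Proof. unfold comm; group_eq. Qed.
Lemma T_one3 a b : comm (comm a b) (@gone G) = gone.
Proof. unfold comm; group_eq. Qed.

Lemma T_inv1 a b c : comm (comm (ginv a) b) c = ginv (comm (comm a b) c).
Proof. apply inv_unique_l. rewrite <- T_mul1, gmul_Vl. apply T_one1. Qed.
Lemma T_inv2 a b c : comm (comm a (ginv b)) c = ginv (comm (comm a b) c).
Proof. apply inv_unique_l. rewrite <- T_mul2, gmul_Vl. apply T_one2. Qed.
Lemma T_inv3 a b c : comm (comm a b) (ginv c) = ginv (comm (comm a b) c).
Proof. apply inv_unique_l. rewrite <- T_mul3, gmul_Vl. apply T_one3. Qed.

Ltac texp := repeat first [ rewrite T_mul1 | rewrite T_mul2 | rewrite T_mul3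
  | rewrite T_inv1 | rewrite T_inv2 | rewrite T_inv3
  | rewrite T_one1 | rewrite T_one2 | rewrite T_one3 ].

Ltac texp_in H := repeat first [ rewrite T_mul1 in H | rewrite T_mul2 in H | rewrite T_mul3 in H
  | rewrite T_inv1 in H | rewrite T_inv2 in H | rewrite T_inv3 in H
  | rewrite T_one1 in H | rewrite T_one2 in H | rewrite T_one3 in H ].
Ltac lhs_of H := match type of H with ?e = _ => e end.

Lemma TxzX x z : In x S -> In z S -> comm (comm x z) x = gone.
Proof.
  intros Hx Hz. set (L := generated (fun w => In w [x; z])).
  assert (HL : has_exponent3 L) by (apply h4; [inS | simpl; lia]).
  apply comm_commute.
  apply (comm_commute_u G L (gen_mul _) (gen_inv _) HL); apply gen_base; simpl; auto.
Qed.

Lemma Txzy x y z : In x S -> In y S -> In z S ->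
  gmul (comm (comm x z) y) (comm (comm y z) x) = gone.
Proof.
  intros Hx Hy Hz. set (L := generated (fun w => In w [x; y; z])).
  assert (HL : has_exponent3 L) by (apply h4; [inS | simpl; lia]).
  assert (H : comm (comm (gmul x y) z) (gmul x y) = gone).
  { apply comm_commute.
    apply (comm_commute_u G L (gen_mul _) (gen_inv _) HL);
      [apply gen_mul|]; apply gen_base; simpl; auto. }
  texp_in H. rewrite !TxzX in H by auto.
  let e := lhs_of H in transitivity e.
  cgroup. exact H.
Qed.

Definition F a b a' := gmul (comm (comm a b) a') (comm (comm a' b) a).

Ltac fclose H1 H2 :=
  let e1 := lhs_of H1 in let e2 := lhs_of H2 in
  transitivity (gmul e1 e2); [cgroup | rewrite H1, H2; group_eq].

Lemma F_stage1 x y : In x S -> In y S -> forall b, F x b y = gone.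
Proof.
  intros Hx Hy. apply closure; unfold F.
  - texp. group_eq.
  - intros a b H1 H2. texp. fclose H1 H2.
  - intros a H. texp. transitivity (ginv (gmul (comm (comm x a) y) (comm (comm y a) x))).
    cgroup. rewrite H; group_eq.
  - intros z Hz. apply Txzy; auto.
Qed.

Lemma F_stage2 x : In x S -> forall a' b, F x b a' = gone.
Proof.
  intros Hx. apply (closure (fun a' => forall b, F x b a' = gone)); unfold F.
  - intro b. texp. group_eq.
  - intros a b H1 H2 c. specialize (H1 c). specialize (H2 c). texp. fclose H1 H2.
  - intros a H c. specialize (H c). texp.
    transitivity (ginv (gmul (comm (comm x c) a) (comm (comm a c) x))).
    cgroup. rewrite H; group_eq.
  - intros y Hy b. apply F_stage1; auto.
Qed.

Lemma F_all : forall a a' b, F a b a' = gone.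
Proof.
  apply (closure (fun a => forall a' b, F a b a' = gone)); unfold F.
  - intros a' b. texp. group_eq.
  - intros a b H1 H2 c d. specialize (H1 c d). specialize (H2 c d). texp. fclose H1 H2.
  - intros a H c d. specialize (H c d). texp.
    transitivity (ginv (gmul (comm (comm a d) c) (comm (comm c d) a))).
    cgroup. rewrite H; group_eq.
  - intros y Hy a' b. apply F_stage2; auto.
Qed.

Lemma D_gen x : In x S -> forall b, comm (comm x b) x = gone.
Proof.
  intros Hx. apply closure.
  - texp. reflexivity.
  - intros a b H1 H2. texp. rewrite H1, H2. group_eq.
  - intros a H. texp. rewrite H. group_eq.
  - intros z Hz. apply TxzX; auto.
Qed.

Lemma D_all : forall a b, comm (comm a b) a = gone.
Proof.
  apply (closure (fun a => forall b, comm (comm a b) a = gone)).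
  - intro b. texp. reflexivity.
  - intros a1 a2 H1 H2 b. specialize (H1 b). specialize (H2 b).
    pose proof (F_all a1 a2 b) as H3. unfold F in H3.
    texp. transitivity (gmul (comm (comm a1 b) a1) (gmul (comm (comm a2 b) a2)
       (gmul (comm (comm a1 b) a2) (comm (comm a2 b) a1)))).
    cgroup. rewrite H1, H2, H3. group_eq.
  - intros a H b. specialize (H b). texp. rewrite H. group_eq.
  - intros; apply D_gen; auto.
Qed.

Lemma cube_formula a b c : commute c a -> commute c b -> gmul b a = gmul a (gmul b c) ->
  cube (gmul a b) = gmul (cube a) (gmul (cube b) (cube c)).
Proof.
  intros Ha Hb E.
  transitivity (gmul a (gmul (gmul b a) (gmul (gmul b a) b))). unfold cube; group_eq.
  rewrite E.
  transitivity (gmul c (gmul c (gmul a (gmul a (gmul (gmul b a) (gmul b b)))))).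
  gen_eq_given (cons c nil) ltac:(first [assumption | apply commute_refl]).
  rewrite E. unfold cube.
  gen_eq_given (cons c nil) ltac:(first [assumption | apply commute_refl]).
Qed.

Lemma cube_mul a b : cube a = gone -> cube b = gone -> cube (gmul a b) = gone.
Proof.
  intros Ha Hb.
  assert (C1 : commute (comm b a) b) by (apply comm_gone_commute, D_all).
  assert (C2 : commute (comm b a) a).
  { replace (comm b a) with (ginv (comm a b)) by (unfold comm; group_eq).
    apply commute_inv_l, comm_gone_commute, D_all. }
  assert (Hc : cube (comm b a) = gone).
  { assert (E1 : cube (gmul b (comm b a)) = gmul (cube b) (cube (comm b a))).
    { unfold cube. gen_eq_given (cons (comm b a) nil) ltac:(first [assumption | apply commute_refl]). }
    assert (E2 : cube (gmul b (comm b a)) = gone).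
    { replace (gmul b (comm b a)) with (conj b a) by (unfold conj, comm; group_eq).
      transitivity (conj (cube b) a). unfold conj, cube; group_eq.
      rewrite Hb. unfold conj; group_eq. }
    rewrite Hb, E2 in E1. rewrite E1. group_eq. }
  rewrite (cube_formula a b (comm b a)); auto.
  rewrite Ha, Hb, Hc. group_eq.
  unfold comm; group_eq.
Qed.

Theorem main_exp3 : forall g : G, cube g = gone.
Proof.
  apply closure.
  - unfold cube; group_eq.
  - apply cube_mul.
  - intros a H. transitivity (ginv (cube a)). unfold cube; group_eq. rewrite H; group_eq.
  - intros s Hs. apply (h4 [s]). inS. simpl; lia. apply gen_base; simpl; auto.
Qed.

End Global.

Theorem lemma6p5 (G : Group) (S : list G)
  (hgen : forall g : G, generated (fun x => In x S) g)
  (h4 : forall T : list G, incl T S -> length T <= 4 ->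
        has_exponent3 (generated (fun x => In x T))) :
  forall g : G, cube g = gone.
Proof.
  exact (main_exp3 G S hgen h4).
Qed.
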